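(* Suppose that along a sequence $p\to+\infty$ one has $(r_p-s_p)/\varepsilon_p^+\to-l$ for some $l\in(0,\infty)$. Then along the same sequence $s_p/\varepsilon_p^+\to l$.
   Context: Let $B$ be the open unit ball in $\mathbb R^2$. For $p>1$, $u_p$ denotes a least energy nodal radial solution of $-\Delta u=|u|^{p-1}u$ in $B$, $u=0$ on $\partial B$ (a radial sign-changing solution in $H^1_0(B)$ minimizing the energy $\frac12\int|\nabla u|^2-\frac1{p+1}\int|u|^{p+1}$ among radial functions $u$ with $u^\pm\ne0$ and $\int_B|\nabla u^\pm|^2=\int_B|u^\pm|^{p+1}$), normalized with $u_p(0)<0$. Write $u_p(x)=u_p(|x|)$. $r_p\in(0,1)$ is the nodal radius ($u_p<0$ on $[0,r_p)$, $u_p>0$ on $(r_p,1)$), $s_p\in(r_p,1)$ satisfies $u_p(s_p)=\max u_p$, and $(\varepsilon_p^+)^{-2}=p\,u_p(s_p)^{p-1}$. *)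

(* Defs.v *)
From Stdlib Require Import Reals Lra.
Open Scope R_scope.

(* x^y for x >= 0 with the convention 0^y = 0 (y > 0). *)
Definition rpow (x y : R) : R := if Rle_dec x 0 then 0 else Rpower x y.

Definition Rint (f : R -> R) (a b v : R) : Prop :=
  exists pr : Riemann_integrable f a b, RiemannInt pr = v.

(* Radial profile r |-> u(r) on [0,1] of a function of H^1_0(B), B unit ball
   of R^2; du is its derivative.  We take C^1 profiles with u(1) = 0
   (the minimizer is a classical solution, so minimizing over
   this class gives the same least energy nodal radial solutions). *)
Definition radial_class (u du : R -> R) : Prop :=
  (forall r, 0 <= r <= 1 -> derivable_pt_lim u r (du r)) /\
  (forall r, 0 <= r <= 1 -> continuity_pt du r) /\
  u 1 = 0.

Definition posp (x : R) : R := Rmax x 0.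
Definition negp (x : R) : R := Rmin x 0.

(* integrals over B in polar coordinates: int_B f(|x|) dx = 2 PI int_0^1 f(r) r dr *)
(* int_B |grad w|^2 = int_B |w|^(p+1), for w = part(u) (u^+ or |u^-|) *)
Definition nehari_part (p : R) (part : R -> R) (u du : R -> R) : Prop :=
  exists a b,
    Rint (fun r => 2 * PI * (if Rlt_dec 0 (part (u r)) then 1 else 0)
                   * (du r) ^ 2 * r) 0 1 a /\
    Rint (fun r => 2 * PI * rpow (Rabs (part (u r))) (p + 1) * r) 0 1 b /\
    a = b.

Definition nodal_nehari (p : R) (u du : R -> R) : Prop :=
  (exists r, 0 <= r <= 1 /\ 0 < u r) /\
  (exists r, 0 <= r <= 1 /\ u r < 0) /\
  nehari_part p posp u du /\
  nehari_part p (fun x => - negp x) u du.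

Definition energy_is (p : R) (u du : R -> R) (e : R) : Prop :=
  exists a b,
    Rint (fun r => 2 * PI * (du r) ^ 2 * r) 0 1 a /\
    Rint (fun r => 2 * PI * rpow (Rabs (u r)) (p + 1) * r) 0 1 b /\
    e = a / 2 - b / (p + 1).

(* u solves -Delta u = |u|^(p-1) u in B (radially: -u'' - u'/r = |u|^(p-1) u
   for 0 < r < 1), u = 0 on the boundary. *)
Definition radial_solution (p : R) (u du : R -> R) : Prop :=
  radial_class u du /\
  exists d2u : R -> R, forall r, 0 < r < 1 ->
    derivable_pt_lim du r (d2u r) /\
    - d2u r - du r / r = rpow (Rabs (u r)) (p - 1) * u r.

Definition least_energy_nodal_radial (p : R) (u du : R -> R) : Prop :=
  radial_solution p u du /\ nodal_nehari p u du /\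
  exists e, energy_is p u du e /\
    forall v dv e', radial_class v dv -> nodal_nehari p v dv ->
      energy_is p v dv e' -> e <= e'.

(* eps with eps^(-2) = p * M^(p-1), M = u_p(s_p) > 0 *)
Definition eps_plus (p M : R) : R := / sqrt (p * Rpower M (p - 1)).

(* Main.v *)
Require Import Defs.
From Stdlib Require Import Reals Lra Psatz Lia.
From Coquelicot Require Import Coquelicot.
Open Scope R_scope.

Lemma key p u du r s : 1 < p -> radial_solution p u du -> 0 < r < s -> s < 1 ->
  (forall t, r < t < 1 -> 0 < u t) -> (forall t, 0 <= t < r -> u t < 0) ->
  (forall t, 0 <= t <= 1 -> u t <= u s) ->
  r <= Rpower (u s) (p-1) * s * (s-r)^2.
Proof.
  intros Hp [[Hd [Hc H1]] [d2u Hode]] Hrs Hs1 Hpos Hneg Hmax.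
  set (M := u s). set (Q := Rpower M (p-1)). set (K := Q * M).
  assert (HM : 0 < M) by (apply Hpos; lra).
  assert (HQ : 0 < Q) by (unfold Q, Rpower; apply exp_pos).
  assert (Hds : du s = 0).
  { assert (pr : derivable_pt u s) by (exists (du s); apply Hd; lra).
    assert (E := deriv_maximum u 0 1 s pr ltac:(lra) Hs1 ltac:(intros; apply Hmax; lra)).
    assert (derive_pt u s pr = du s).
    { apply derive_pt_eq_0. apply Hd; lra. }
    lra. }
  assert (St1 : forall t0, r <= t0 <= s -> t0 * du t0 <= K * (s*s - t0*t0) / 2).
  { intros t0 Ht0. destruct (Req_dec t0 s) as [->|Hne].
    - rewrite Hds. nra.
    - set (g := fun t => t * du t - K * (s*s - t*t)/2).
      set (g' := fun t => du t + t * d2u t + K * t).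
      destruct (MVT_cor2 g g' t0 s ltac:(lra)) as [c [Hc1 Hc2]].
      { intros c Hcc. destruct (Hode c ltac:(lra)) as [Hd2 _].
        unfold g, g'.
        replace (du c + c * d2u c + K * c) with
          ((1 * du c + c * d2u c) - (- K * c)) by ring.
        apply (derivable_pt_lim_minus (fun t => t * du t) (fun t => K * (s*s - t*t)/2)).
        - apply (derivable_pt_lim_mult id du c 1 (d2u c)); [apply derivable_pt_lim_id|exact Hd2].
        - apply is_derive_Reals. auto_derive; auto. field. }
      assert (Hg' : 0 <= g' c).
      { destruct (Hode c ltac:(lra)) as [_ E].
        assert (Huc : 0 < u c) by (apply Hpos; lra).
        assert (HucM : u c <= M) by (apply Hmax; lra).
        assert (Hrp : rpow (Rabs (u c)) (p-1) <= Q).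
        { unfold rpow. rewrite Rabs_pos_eq by lra.
          destruct (Rle_dec (u c) 0); [lra|]. apply Rle_Rpower_l; lra. }
        assert (Hr0 : 0 <= rpow (Rabs (u c)) (p-1)).
        { unfold rpow. destruct (Rle_dec _ 0); [lra|]. unfold Rpower; left; apply exp_pos. }
        unfold g'.
        assert (E2 : c * d2u c + du c = - c * (rpow (Rabs (u c)) (p - 1) * u c)).
        { assert (c <> 0) by lra.
          assert (E3 : du c / c = - d2u c - rpow (Rabs (u c)) (p - 1) * u c) by lra.
          assert (E4 : du c = c * (du c / c)) by (field; auto).
          rewrite E4, E3. ring. }
        assert (E5 : rpow (Rabs (u c)) (p - 1) * u c <= Q * M) by (apply Rmult_le_compat; lra).
        unfold K. assert (0 < c) by lra. nra. }
      unfold g in Hc1. rewrite Hds in Hc1. nra. }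
  destruct (MVT_cor2 u du r s ltac:(lra)) as [c [Hc1 Hc2]].
  { intros c Hcc; apply Hd; lra. }
  assert (Hur : u r <= 0).
  { destruct (Rle_dec (u r) 0) as [|Hn]; [auto|exfalso].
    assert (Hct : continuity_pt u r) by (apply derivable_continuous_pt; exists (du r); apply Hd; lra).
    destruct (Hct (u r) ltac:(lra)) as [del [Hdel Hx]].
    set (t := r - Rmin del r / 2).
    assert (Hmin1 : Rmin del r <= del) by apply Rmin_l.
    assert (Hmin2 : Rmin del r <= r) by apply Rmin_r.
    assert (Hmin3 : 0 < Rmin del r) by (apply Rmin_pos; lra).
    assert (Ht : u t < 0) by (apply Hneg; unfold t; lra).
    assert (Hd' := Hx t).
    simpl in Hd'. unfold R_dist in Hd'.
    assert (Hdd: Rabs (u t - u r) < u r).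
    { apply Hd'. split.
      - unfold D_x, no_cond. split; auto. unfold t; lra.
      - unfold t. rewrite Rabs_left; lra. }
    rewrite Rabs_left in Hdd; lra. }
  assert (A := St1 c ltac:(lra)).
  fold M in Hc1.
  unfold K in A.
  (* M <= du c (s-r);  c du c <= Q M (s-c)(s+c)/2 <= Q M (s-r) s *)
  assert (B : c * du c <= Q * M * ((s - r) * s)).
  { assert (F : (s*s - c*c)/2 <= (s-r)*s) by nra.
    assert (G : 0 < Q * M) by nra.
    apply (Rle_trans _ _ _ A).
    replace (Q * M * (s * s - c * c) / 2) with (Q * M * ((s * s - c * c) / 2)) by field.
    apply Rmult_le_compat_l; lra. }
  assert (C : M * r <= Q * M * ((s - r) * s) * (s - r)).
  { destruct (Rle_dec 0 (du c)).
    - nra.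
    - nra. }
  apply Rmult_le_reg_l with M; [lra|]. nra.
Qed.

Lemma bound_step p l eps b d : 0 < l -> 0 < eps -> 0 < b -> l/2 < d < 2*l ->
  8*l*l < p -> 32*l*l*l/eps < p -> b * p <= (b + d) * (d*d) -> b < eps/2.
Proof.
  intros Hl He Hb Hd Hp1 Hp2 H.
  assert (Hp : 0 < p) by nra.
  assert (H1 : d*d < p/2) by nra.
  assert (H2 : b * (p/2) <= d*d*d).
  { assert (b * (p/2) <= b * (p - d*d)) by (apply Rmult_le_compat_l; lra). nra. }
  assert (H3a : d*d < 4*l*l) by nra.
  assert (H3 : d*d*d < 8*l*l*l).
  { assert (d*d*d < 4*l*l*d) by (apply Rmult_lt_compat_r; lra). nra. }
  assert (H4 : 32*l*l*l < p * eps).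
  { apply (Rmult_lt_compat_r eps) in Hp2; [|lra].
    replace (32 * l * l * l / eps * eps) with (32*l*l*l) in Hp2 by (field; lra). lra. }
  assert (H5 : b * p < 16*l*l*l) by lra.
  assert (H6 : b * p * eps < 16*l*l*l*eps) by (apply Rmult_lt_compat_r; lra).
  nra.
Qed.

Theorem lemma3p5 (pn : nat -> R) (u du : nat -> R -> R) (rn sn : nat -> R) (l : R) :
  cv_infty pn ->
  (forall n, 1 < pn n) ->
  (forall n, least_energy_nodal_radial (pn n) (u n) (du n)) ->
  (forall n, u n 0 < 0) ->
  (forall n, 0 < rn n < 1 /\
     (forall r, 0 <= r < rn n -> u n r < 0) /\
     (forall r, rn n < r < 1 -> 0 < u n r)) ->
  (forall n, rn n < sn n < 1 /\
     (forall r, 0 <= r <= 1 -> u n r <= u n (sn n))) ->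
  0 < l ->
  Un_cv (fun n => (rn n - sn n) / eps_plus (pn n) (u n (sn n))) (- l) ->
  Un_cv (fun n => sn n / eps_plus (pn n) (u n (sn n))) l.
Proof.
  intros Hinf Hp Hle Hu0 Hr Hs Hl Hcv eps Heps.
  destruct (Hcv (Rmin (eps/2) (l/2)) ltac:(apply Rmin_pos; lra)) as [N1 HN1].
  destruct (Hinf (Rmax (8*l*l) (32*l*l*l/eps))) as [N2 HN2].
  exists (max N1 N2). intros n Hn.
  assert (HA := HN1 n ltac:(lia)). assert (HB := HN2 n ltac:(lia)).
  assert (Hm1 := Rmin_l (eps/2) (l/2)). assert (Hm2 := Rmin_r (eps/2) (l/2)).
  assert (Hx1 := Rmax_l (8*l*l) (32*l*l*l/eps)). assert (Hx2 := Rmax_r (8*l*l) (32*l*l*l/eps)).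
  unfold R_dist in *.
  destruct (Hr n) as [Hr1 [Hneg Hpos]]. destruct (Hs n) as [Hs1 Hmax].
  destruct (Hle n) as [Hsol _].
  set (p := pn n) in *. set (r := rn n) in *. set (s := sn n) in *.
  set (M := u n s) in *.
  assert (Hk := key p (u n) (du n) r s (Hp n) Hsol ltac:(lra) ltac:(lra) Hpos Hneg Hmax).
  fold M in Hk. set (Q := Rpower M (p-1)) in *.
  assert (HQ : 0 < Q) by (unfold Q, Rpower; apply exp_pos).
  assert (Hp0 : 0 < p) by (specialize (Hp n); fold p in Hp; lra).
  unfold eps_plus. fold Q.
  set (e := / sqrt (p * Q)) in *.
  assert (Hsq : 0 < sqrt (p * Q)) by (apply sqrt_lt_R0; nra).
  assert (He : 0 < e) by (unfold e; apply Rinv_0_lt_compat; lra).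
  assert (HeQ : e * e * p * Q = 1).
  { unfold e. assert (Hqq := sqrt_sqrt (p*Q) ltac:(nra)).
    replace (/ sqrt (p * Q) * / sqrt (p * Q) * p * Q) with ((p*Q) / (sqrt (p * Q) * sqrt (p * Q))) by (field; lra).
    rewrite Hqq. field. nra. }
  set (b := r / e). set (d := (s - r) / e).
  assert (Hsd : s / e = b + d) by (unfold b, d; field; lra).
  assert (Hdl : Rabs (d - l) < Rmin (eps / 2) (l / 2)).
  { replace (d - l) with (- ((r - s)/e - - l)) by (unfold d; field; lra).
    rewrite Rabs_Ropp. exact HA. }
  apply Rabs_def2 in Hdl.
  assert (Hb0 : 0 < b) by (unfold b; apply Rdiv_lt_0_compat; lra).
  assert (Hkey : b * p <= (b + d) * (d * d)).
  { assert (Hr' : r = b * e) by (unfold b; field; lra).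
    assert (Hs' : s = (b + d) * e) by (rewrite <- Hsd; field; lra).
    assert (Hsr : s - r = d * e) by (unfold d; field; lra).
    rewrite Hsr, Hr', Hs' in Hk.
    apply (Rmult_le_compat_r (p / e)) in Hk; [|left; apply Rdiv_lt_0_compat; lra].
    replace (b * e * (p / e)) with (b * p) in Hk by (field; lra).
    replace (Q * ((b + d) * e) * (d * e) ^ 2 * (p / e)) with ((b + d) * (d * d) * (e * e * p * Q)) in Hk by (field; lra).
    rewrite HeQ in Hk. lra. }
  rewrite Hsd.
  assert (Hbe := bound_step p l eps b d Hl Heps Hb0 ltac:(lra) ltac:(lra) ltac:(lra) Hkey).
  apply Rabs_def1; lra.
Qed.
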